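(* Let $n\ge 2$, $V=\{1,\dots,n\}$, and let $\mathcal{E}$ be the edge set of $K_n$. Let $h:\mathbb{Z}_{\ge0}\to\mathbb{R}$ be non-decreasing, concave, with $h(0)=0$, and let $F(E)=\sum_{v\in V}h(d_E(v))$ for $E\subseteq\mathcal{E}$, where $d_E(v)$ is the degree of $v$ in $(V,E)$. Identify a real symmetric $n\times n$ matrix's off-diagonal part with a vector $X=(X_{ij})_{\{i,j\}\in\mathcal{E}}\in\mathbb{R}^{\mathcal{E}}$ and let $\mathrm{Supp}(X)=\{\{i,j\}\in\mathcal{E}: X_{ij}\neq 0\}$. For each $i\in V$, let $|X_{i,(0)}|\ge |X_{i,(1)}|\ge\dots\ge |X_{i,(n-2)}|$ be the absolute values of the $n-1$ entries $X_{ij}$, $j\neq i$, sorted in non-increasing order. Then the convex envelope (largest convex minorant) of the function $X\mapsto F(\mathrm{Supp}(X))$ on the unit $\ell_\infty$ ball $\{X\in\mathbb{R}^{\mathcal{E}}:\max_{\{i,j\}}|X_{ij}|\le 1\}$ is $$\Omega(X)=\sum_{i=1}^{n}\sum_{k=0}^{n-2}\big(h(k+1)-h(k)\big)\,|X_{i,(k)}|,$$ which equals the Lovász extension of $F$ evaluated at $|X|=(|X_{ij}|)$. In particular $\Omega$ is convex and piecewise linear.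
   Context: The Lovász extension of a set function $F$ on a finite ground set $\mathcal{E}$ with $F(\emptyset)=0$ is $f(w)=\sum_{k=1}^{m} w_{j_k}\big(F(\{j_1,\dots,j_k\})-F(\{j_1,\dots,j_{k-1}\})\big)$ for $w\in\mathbb{R}^{\mathcal{E}}$, where $m=|\mathcal{E}|$ and $w_{j_1}\ge\dots\ge w_{j_m}$ is a non-increasing ordering of the coordinates. *)

(* Defs.v *)
From HB Require Import structures.
From mathcomp Require Import all_boot all_order all_algebra.
Set Implicit Arguments. Unset Strict Implicit. Unset Printing Implicit Defensive.
Import Order.TTheory GRing.Theory Num.Theory.
Local Open Scope ring_scope.

(* Edges of K_n on vertex set 'I_n: unordered pairs {i,j}, i<>j, encoded as (i,j) with i<j. *)
Definition edge (n : nat) := {p : 'I_n * 'I_n | (nat_of_ord p.1 < nat_of_ord p.2)%N}.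

Definition deg (n : nat) (E : {set edge n}) (v : 'I_n) : nat :=
  #|[set e in E | ((val e).1 == v) || ((val e).2 == v)]|.

Definition Fdeg (R : numDomainType) (n : nat) (h : nat -> R) (E : {set edge n}) : R :=
  \sum_(v : 'I_n) h (deg E v).

Definition supp (R : numDomainType) (n : nat) (X : edge n -> R) : {set edge n} :=
  [set e | X e != 0].

(* entry X_{ij} of the symmetric matrix (0 on the diagonal) *)
Definition entry (R : numDomainType) (n : nat) (X : edge n -> R) (i j : 'I_n) : R :=
  if (nat_of_ord i < nat_of_ord j)%N then oapp X 0 (insub (i, j) : option (edge n))
  else oapp X 0 (insub (j, i) : option (edge n)).

Definition sorted_row (R : numDomainType) (n : nat) (X : edge n -> R) (i : 'I_n) : seq R :=
  sort (fun a b : R => b <= a) [seq `|entry X i j| | j <- enum 'I_n & j != i].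

Definition Omega (R : numDomainType) (n : nat) (h : nat -> R) (X : edge n -> R) : R :=
  \sum_(i : 'I_n) \sum_(k < n.-1) (h k.+1 - h k) * nth 0 (sorted_row X i) k.

(* Lovasz extension of a set function F (F(set0)=0 assumed by the user):
   f(w) = sum_k w_{j_k} (F{j_1..j_k} - F{j_1..j_{k-1}}) for a non-increasing ordering. *)
Definition lovasz (R : numDomainType) (T : finType) (F : {set T} -> R) (w : T -> R) : R :=
  let s := sort (fun a b : T => w b <= w a) (enum T) in
  \sum_(x <- s) w x * (F [set y in take (index x s).+1 s] - F [set y in take (index x s) s]).

Definition convex_on (R : numDomainType) (T : Type) (B : (T -> R) -> Prop)
    (g : (T -> R) -> R) : Prop :=
  forall X Y t, B X -> B Y -> 0 <= t -> t <= 1 ->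
    g (fun e => t * X e + (1 - t) * Y e) <= t * g X + (1 - t) * g Y.

Definition convex_envelope_on (R : numDomainType) (T : Type) (B : (T -> R) -> Prop)
    (f g : (T -> R) -> R) : Prop :=
  [/\ convex_on B g,
      (forall X, B X -> g X <= f X) &
      (forall phi, convex_on B phi -> (forall X, B X -> phi X <= f X) ->
         forall X, B X -> phi X <= g X)].

Definition linf_ball (R : numDomainType) (T : Type) (X : T -> R) : Prop :=
  forall e, `|X e| <= 1.

Definition piecewise_linear (R : numDomainType) (T : finType) (g : (T -> R) -> R) : Prop :=
  exists cs : seq {ffun T -> R},
    forall X, exists2 c, c \in cs & g X = \sum_(e : T) c e * X e.

(* Main.v *)
Require Import Defs.
From HB Require Import structures.
From mathcomp Require Import all_boot all_order all_algebra all_fingroup.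
From mathcomp Require Import ring lra.
From Stdlib Require Import FunctionalExtensionality.
Set Implicit Arguments. Unset Strict Implicit. Unset Printing Implicit Defensive.
Import Order.TTheory GRing.Theory Num.Theory.
Local Open Scope ring_scope.

Fixpoint wsum (R : realFieldType) (c : nat -> R) (s : seq R) : R :=
  if s is x :: s' then c 0%N * x + wsum (fun k => c k.+1) s' else 0.

Definition geR (R : realFieldType) : rel R := fun a b => b <= a.

Lemma geR_trans (R : realFieldType) : transitive (@geR R).
Proof. by move=> y x z; rewrite /geR => h1 h2; apply: le_trans h2 h1. Qed.
Lemma geR_total (R : realFieldType) : total (@geR R).
Proof. by move=> x y; rewrite /geR orbC le_total. Qed.
Lemma geR_anti (R : realFieldType) : antisymmetric (@geR R).
Proof. by move=> x y; rewrite /geR => /andP[h1 h2]; apply/eqP; rewrite eq_le h1 h2. Qed.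

Lemma sortEq (R : realFieldType) (s u : seq R) :
  perm_eq u s -> sorted (@geR R) u -> sort (@geR R) s = u.
Proof.
move=> pus su.
have -> : sort (@geR R) s = sort (@geR R) u.
  apply/esym/(perm_sortP (@geR_total R) (@geR_trans R) (@geR_anti R)); exact: pus.
exact: sorted_sort (@geR_trans R) _ su.
Qed.

Lemma eq_wsum (R : realFieldType) (c1 c2 : nat -> R) s :
  (forall k, c1 k = c2 k) -> wsum c1 s = wsum c2 s.
Proof.
elim: s c1 c2 => [|x s IH] c1 c2 e //=.
by rewrite e (IH _ (fun k => c2 k.+1)).
Qed.

Lemma wsumE (R : realFieldType) (c : nat -> R) s :
  wsum c s = \sum_(0 <= k < size s) c k * s`_k.
Proof.
elim: s c => [|x s IH] c /=; first by rewrite big_geq.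
by rewrite big_nat_recl // IH.
Qed.

Lemma wsum_rcons0 (R : realFieldType) (c : nat -> R) s :
  wsum c (rcons s 0) = wsum c s.
Proof. elim: s c => [|x s IH] c /=; first by rewrite mulr0 addr0. by rewrite IH. Qed.

Lemma wsum_le (R : realFieldType) (c : nat -> R) (f g : R -> R) s :
  (forall k, 0 <= c k) -> {in s, forall x, f x <= g x} ->
  wsum c (map f s) <= wsum c (map g s).
Proof.
elim: s c => [|x s IH] c c0 fg //=.
apply: lerD; first by apply: ler_wpM2l => //; apply: fg; rewrite inE eqxx.
apply: IH => [k|y ys]; first exact: c0. by apply: fg; rewrite inE ys orbT.
Qed.

Lemma wsum_lin (R : realFieldType) (c : nat -> R) (a : R) (p q : R -> R) s :
  wsum c (map (fun x => a * p x + q x) s) = a * wsum c (map p s) + wsum c (map q s).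
Proof. elim: s c => [|x s IH] c /=; first by rewrite mulr0 addr0. rewrite IH; ring. Qed.

Lemma wsum_scale (R : realFieldType) (c : nat -> R) (a : R) s :
  wsum c (map (fun x => a * x) s) = a * wsum c s.
Proof. elim: s c => [|x s IH] c /=; first by rewrite mulr0. rewrite IH; ring. Qed.

Lemma sorted_cons_all (R : realFieldType) (y : R) s :
  sorted (@geR R) (y :: s) = all (@geR R y) s && sorted (@geR R) s.
Proof. by rewrite /= path_sortedE //; apply: geR_trans. Qed.

Lemma rearr_ins (R : realFieldType) (u : seq R) (c : nat -> R) x :
  sorted (@geR R) u -> (forall k, c k.+1 <= c k) ->
  wsum c (x :: u) <= wsum c (sort (@geR R) (x :: u)).
Proof.
elim: u c x => [|y u IH] c x su cdec.
  by rewrite (sorted_sort (@geR_trans R)).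
case: (leP y x) => hyx.
  by rewrite (sorted_sort (@geR_trans R)) //= {1}/geR hyx.
move: (su); rewrite sorted_cons_all => /andP[ay su'].
have -> : sort (@geR R) [:: x, y & u] = y :: sort (@geR R) (x :: u).
  apply: sortEq.
    apply: (@perm_trans _ [:: y, x & u]); first by rewrite perm_cons perm_sort.
    by apply/seq.permP => p /=; rewrite addnCA.
  rewrite sorted_cons_all sort_sorted ?andbT; last by apply: geR_total.
  rewrite all_sort /= /geR (ltW hyx) /=. exact: ay.
rewrite /=.
have := IH (fun k => c k.+1) x su' (fun k => cdec k.+1). rewrite /=.
have h : 0 <= (c 0%N - c 1%N) * (y - x).
  by apply: mulr_ge0; rewrite subr_ge0 // ltW.
lra.
Qed.

Lemma rearr (R : realFieldType) (t : seq R) (c : nat -> R) :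
  (forall k, c k.+1 <= c k) -> wsum c t <= wsum c (sort (@geR R) t).
Proof.
elim: t c => [|x t IH] c cdec //=.
apply: le_trans (_ : c 0%N * x + wsum (fun k => c k.+1) (sort (@geR R) t) <= _).
  by rewrite lerD2l; apply: IH.
have := rearr_ins x (sort_sorted (@geR_total R) t) cdec.
rewrite /= => H; apply: le_trans H _.
have -> : sort (@geR R) (x :: sort (@geR R) t) = sort (@geR R) (x :: t) => //.
apply/(perm_sortP (@geR_total R) (@geR_trans R) (@geR_anti R)).
by rewrite perm_cons perm_sort.
Qed.


Definition oedge (n : nat) (i j : 'I_n) : option (edge n) :=
  if (nat_of_ord i < nat_of_ord j)%N then (insub (i, j) : option (edge n)) else (insub (j, i) : option (edge n)).

Definition inc (n : nat) (v : 'I_n) (e : edge n) : bool :=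
  ((val e).1 == v) || ((val e).2 == v).

Definition other (n : nat) (v : 'I_n) (e : edge n) : 'I_n :=
  if (val e).1 == v then (val e).2 else (val e).1.

Lemma entryE (R : numDomainType) n (X : edge n -> R) i j :
  entry X i j = oapp X 0 (oedge i j).
Proof. by rewrite /entry /oedge; case: ifP. Qed.

Lemma oedge_None n (v j : 'I_n) : (oedge v j == None) = (j == v).
Proof.
rewrite /oedge; case: (ltngtP v j) => h.
- rewrite insubT /=; apply/esym/negP => /eqP hh; move: h; by rewrite hh ltnn.
- rewrite insubT /=; apply/esym/negP => /eqP hh; move: h; by rewrite hh ltnn.
- have hjv : j = v by apply: val_inj; rewrite /= h.
  subst j; by rewrite insubF ?eqxx ?ltnn.
Qed.

Lemma oedge_cancel n (v : 'I_n) : ocancel (@oedge n v) (@other n v).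
Proof.
move=> j; rewrite /oedge /other; case: (ltngtP v j) => h.
- by rewrite insubT /= eqxx.
- rewrite insubT /= ifN //; apply/negP => /eqP hh; move: h; by rewrite hh ltnn.
- have hjv : j = v by apply: val_inj; rewrite /= h.
  subst j; by rewrite insubF ?ltnn.
Qed.

Lemma oedge_inc n (v j : 'I_n) e : oedge v j = Some e -> inc v e.
Proof.
rewrite /oedge /inc; case: (ltngtP v j) => h.
- by rewrite insubT => -[<-] /=; rewrite eqxx.
- by rewrite insubT => -[<-] /=; rewrite eqxx orbT.
- by rewrite insubF ?h ?ltnn.
Qed.

Lemma inc_oedge n (v : 'I_n) e : inc v e -> oedge v (other v e) = Some e.
Proof.
case: e => [[a b] /= hab]; rewrite /inc /other /oedge /=.
case: (eqVneq a v) => [<- _|hav /= /eqP hbv].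
  by rewrite hab insubT; congr Some; apply: val_inj.
subst b; rewrite ltnNge (ltnW hab) /= insubT; congr Some; exact: val_inj.
Qed.

Lemma bij_perm n (v : 'I_n) :
  perm_eq (pmap (@oedge n v) (enum 'I_n)) [seq e <- enum {: edge n} | inc v e].
Proof.
apply: uniq_perm.
- exact: pmap_uniq (@oedge_cancel n v) _ (enum_uniq _).
- by rewrite filter_uniq // enum_uniq.
move=> e; rewrite mem_pmap mem_filter mem_enum andbT.
apply/mapP/idP => [[j _ /esym /oedge_inc] //|/inc_oedge h].
by exists (other v e) => //; rewrite mem_enum.
Qed.

Lemma perm_oapp (T : eqType) (R : numDomainType) (U : eqType) (W : U -> R)
    (o : T -> option U) (l : seq T) :
  perm_eq (map (fun j => oapp W 0 (o j)) l)
          (map W (pmap o l) ++ nseq (count (fun j => o j == None) l) 0).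
Proof.
elim: l => [|j l IH] //=.
case: (o j) => [e|] /=; first by rewrite perm_cons.
rewrite /=.
apply: (@perm_trans _ (0 :: (map W (pmap o l) ++ nseq (count (fun j => o j == None) l) 0))).
  by rewrite perm_cons.
by rewrite -cat1s -[_ ++ 0 :: _]/(_ ++ [:: 0] ++ _) perm_catCA.
Qed.

Definition rowfull (R : numDomainType) n (X : edge n -> R) (i : 'I_n) : seq R :=
  [seq `|entry X i j| | j <- enum 'I_n].

Lemma count_None n (v : 'I_n) :
  count (fun j => oedge v j == None) (enum 'I_n) = 1%N.
Proof.
rewrite (eq_count (a2 := pred1 v)); last by move=> j; rewrite oedge_None.
by rewrite count_uniq_mem ?enum_uniq // mem_enum.
Qed.

Lemma rowfull_perm (R : numDomainType) n (X : edge n -> R) v :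
  perm_eq (rowfull X v) (rcons [seq `|X e| | e <- [seq e <- enum {: edge n} | inc v e]] 0).
Proof.
have -> : rowfull X v = map (fun j => oapp (fun e => `|X e|) 0 (oedge v j)) (enum 'I_n).
  by apply: eq_map => j; rewrite entryE; case: oedge => //=; rewrite normr0.
apply: perm_trans (perm_oapp _ _ _) _.
rewrite count_None -cats1 perm_cat2r.
exact: perm_map (bij_perm v).
Qed.


Lemma sorted_rcons0 (R : realFieldType) (s : seq R) :
  sorted (@geR R) s -> all (fun x => 0 <= x) s -> sorted (@geR R) (rcons s 0).
Proof.
case: s => [|x s] //= ps al.
rewrite rcons_path ps /= /geR.
have al' : all (fun x => 0 <= x) (x :: s) by exact: al.
have : last x s \in x :: s by apply: mem_last.
by move/(allP al').
Qed.

Lemma entry_ii (R : numDomainType) n (X : edge n -> R) i : entry X i i = 0.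
Proof. by rewrite entryE; move: (oedge_None i i); rewrite eqxx => /eqP ->. Qed.

Lemma rowsort (R : realFieldType) n (X : edge n -> R) i :
  sort (@geR R) (rowfull X i) = rcons (sorted_row X i) 0.
Proof.
apply: sortEq; last first.
  apply: sorted_rcons0; first exact: (sort_sorted (@geR_total R)).
  by rewrite all_sort; apply/allP => x /mapP [j _ ->].
rewrite /sorted_row -cats1.
apply: (@perm_trans _ ([seq `|entry X i j| | j <- enum 'I_n & j != i] ++ [:: 0])).
  by rewrite perm_cat2r perm_sort.
rewrite /rowfull.
apply: (@perm_trans _ ([seq `|entry X i j| | j <- [seq j <- enum 'I_n | j != i] ++ [seq j <- enum 'I_n | predC (fun j => j != i) j]])); last first.
  by apply: perm_map; rewrite perm_filterC.
rewrite map_cat perm_cat2l.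
have -> : [seq j <- enum 'I_n | predC (fun j => j != i) j] = [:: i].
  rewrite (eq_filter (a2 := pred1 i)); last by move=> j /=; rewrite negbK.
  by rewrite filter_pred1_uniq ?enum_uniq ?mem_enum.
by rewrite /= entry_ii normr0.
Qed.

Definition incr (R : realFieldType) (h : nat -> R) : nat -> R := fun k => h k.+1 - h k.

Lemma size_sorted_row (R : realFieldType) n (X : edge n -> R) i :
  size (sorted_row X i) = n.-1.
Proof.
rewrite /sorted_row size_sort size_map size_filter.
have hc := count_predC (fun j => j != i) (enum 'I_n).
have hs := size_enum_ord n.
have h1 : count (predC (fun j => j != i)) (enum 'I_n) = 1%N.
  rewrite (eq_count (a2 := pred1 i)); last by move=> j /=; rewrite negbK.
  by rewrite count_uniq_mem ?enum_uniq ?mem_enum.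
rewrite h1 hs in hc; by rewrite -[in RHS]hc addn1.
Qed.

Lemma OmegaE (R : realFieldType) n (h : nat -> R) (X : edge n -> R) :
  Omega h X = \sum_(i : 'I_n) wsum (incr h) (sort (@geR R) (rowfull X i)).
Proof.
apply: eq_bigr => i _.
rewrite rowsort wsum_rcons0 wsumE size_sorted_row -(big_mkord xpredT (fun k => (h k.+1 - h k) * nth 0 (sorted_row X i) k)).
by [].
Qed.


Definition sg (R : realFieldType) (b : bool) : R := if b then 1 else -1.

Definition Lform (R : realFieldType) n (h : nat -> R) (p : {ffun 'I_n -> {perm 'I_n}})
    (e : {ffun 'I_n * 'I_n -> bool}) (X : edge n -> R) : R :=
  \sum_(i : 'I_n) \sum_(k < n) incr h k * (sg R (e (i, p i k)) * entry X i (p i k)).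

Lemma entry_lin (R : realFieldType) n (X Y : edge n -> R) a b i j :
  entry (fun x => a * X x + b * Y x) i j = a * entry X i j + b * entry Y i j.
Proof. by rewrite !entryE; case: oedge => [y|] //=; rewrite !mulr0 addr0. Qed.

Lemma Lform_lin (R : realFieldType) n h p e (X Y : edge n -> R) t :
  Lform h p e (fun x => t * X x + (1 - t) * Y x) = t * Lform h p e X + (1 - t) * Lform h p e Y.
Proof.
rewrite /Lform !mulr_sumr -big_split; apply: eq_bigr => i _ /=.
rewrite !mulr_sumr -big_split; apply: eq_bigr => k _ /=.
rewrite entry_lin; ring.
Qed.

Lemma sum_wsum (R : realFieldType) n (c : nat -> R) (g : 'I_n -> R) :
  \sum_(k < n) c k * g k = wsum c (map g (enum 'I_n)).
Proof.
rewrite wsumE size_map size_enum_ord big_mkord; apply: eq_bigr => k _.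
by rewrite (nth_map k) ?size_enum_ord // nth_ord_enum.
Qed.

Lemma perm_map_perm n (s : {perm 'I_n}) : perm_eq (map s (enum 'I_n)) (enum 'I_n).
Proof.
apply: uniq_perm; first by rewrite map_inj_uniq ?enum_uniq //; apply: perm_inj.
  exact: enum_uniq.
move=> x; rewrite mem_enum; apply/mapP; exists (perm_inv s x); first by rewrite mem_enum.
by rewrite permKV.
Qed.

Lemma sg_le (R : realFieldType) b (x : R) : sg R b * x <= `|x|.
Proof. by case: b; rewrite /= ?mul1r ?mulN1r ?ler_norm // -normrN ler_norm. Qed.

Lemma incr_ge0 (R : realFieldType) (h : nat -> R) :
  (forall k, h k <= h k.+1) -> forall k, 0 <= incr h k.
Proof. by move=> hm k; rewrite /incr subr_ge0. Qed.

Lemma incr_dec (R : realFieldType) (h : nat -> R) :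
  (forall k, h k.+2 - h k.+1 <= h k.+1 - h k) -> forall k, incr h k.+1 <= incr h k.
Proof. by move=> hc k; apply: hc. Qed.

Lemma Lform_le (R : realFieldType) n h p e (X : edge n -> R) :
  (forall k, h k <= h k.+1) -> (forall k, h k.+2 - h k.+1 <= h k.+1 - h k) ->
  Lform h p e X <= Omega h X.
Proof.
move=> hm hc; rewrite OmegaE /Lform; apply: ler_sum => i _.
apply: le_trans (_ : \sum_(k < n) incr h k * `|entry X i (p i k)| <= _).
  apply: ler_sum => k _; apply: ler_wpM2l; first exact: incr_ge0.
  exact: sg_le.
rewrite (sum_wsum _ (fun k : 'I_n => `|entry X i (p i k)|)).
apply: le_trans (rearr _ (incr_dec hc)) _.
have -> : sort (@geR R) [seq `|entry X i (p i k)| | k <- enum 'I_n] = sort (@geR R) (rowfull X i) => //.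
apply/(perm_sortP (@geR_total R) (@geR_trans R) (@geR_anti R)).
rewrite /rowfull (map_comp (fun j => `|entry X i j|) (p i)).
exact: perm_map (perm_map_perm _).
Qed.

Lemma Lform_attain (R : realFieldType) n h (X : edge n -> R) :
  exists p e, Lform h p e X = Omega h X.
Proof.
pose f (i : 'I_n) := fun j => `|entry X i j|.
pose idx (i : 'I_n) := sort (fun a b => f i b <= f i a) (enum 'I_n).
have sz i : size (idx i) = n by rewrite size_sort size_enum_ord.
pose q (i : 'I_n) (k : 'I_n) := nth k (idx i) k.
have qinj i : injective (q i).
  move=> k1 k2; rewrite /q (set_nth_default k1 k2); last by rewrite sz.
  move/eqP; rewrite nth_uniq ?sz // ?sort_uniq ?enum_uniq //.
  by move/eqP/val_inj.
pose p := [ffun i => perm (qinj i)].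
pose e := [ffun ij : 'I_n * 'I_n => 0 <= entry X ij.1 ij.2].
exists p, e; rewrite OmegaE /Lform; apply: eq_bigr => i _.
have -> : \sum_(k < n) incr h k * (sg R (e (i, p i k)) * entry X i (p i k))
    = \sum_(k < n) incr h k * f i (q i k).
  apply: eq_bigr => k _; rewrite /e /p !ffunE permE /f /=.
  case: (leP 0 (entry X i (q i k))) => hx /=; [by rewrite mul1r ger0_norm | by rewrite mulN1r ltr0_norm].
rewrite (sum_wsum _ (fun k : 'I_n => f i (q i k))); congr wsum.
rewrite (map_comp (f i) (q i)).
have -> : map (q i) (enum 'I_n) = idx i.
  apply: (eq_from_nth (x0 := i)); first by rewrite size_map size_enum_ord sz.
  move=> k; rewrite size_map size_enum_ord => hk.
  rewrite (nth_map i) ?size_enum_ord // /q.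
  have -> : nth i (enum 'I_n) k = Ordinal hk.
    by apply: val_inj; rewrite /= nth_enum_ord.
  by rewrite /= (set_nth_default i) ?sz.
rewrite /idx /rowfull.
by rewrite (map_sort (leT := @geR R) (leT' := fun a b => f i b <= f i a)).
Qed.

Lemma Omega_convex (R : realFieldType) n h :
  (forall k, h k <= h k.+1) -> (forall k, h k.+2 - h k.+1 <= h k.+1 - h k) ->
  forall (X Y : edge n -> R) t, 0 <= t -> t <= 1 ->
  Omega h (fun x => t * X x + (1 - t) * Y x) <= t * Omega h X + (1 - t) * Omega h Y.
Proof.
move=> hm hc X Y t t0 t1.
have [p [e <-]] := Lform_attain h (fun x => t * X x + (1 - t) * Y x).
rewrite Lform_lin; apply: lerD; apply: ler_wpM2l; rewrite ?subr_ge0 //; exact: Lform_le.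
Qed.

Definition coef (R : realFieldType) n (h : nat -> R) (p : {ffun 'I_n -> {perm 'I_n}})
    (e : {ffun 'I_n * 'I_n -> bool}) : {ffun edge n -> R} :=
  [ffun x => \sum_(i : 'I_n) \sum_(k < n) incr h k * (sg R (e (i, p i k)) * (oedge i (p i k) == Some x)%:R)].

Lemma entry_sum (R : realFieldType) n (X : edge n -> R) i j :
  entry X i j = \sum_(x : edge n) (oedge i j == Some x)%:R * X x.
Proof.
rewrite entryE; case: oedge => [y|] /=.
  rewrite (bigD1 y) //= eqxx mul1r big1 ?addr0 // => x hx.
  by rewrite (_ : (Some y == Some x) = false) ?mul0r //; apply/negbTE; apply: contra hx => /eqP [->].
by rewrite big1 // => x _; rewrite mul0r.
Qed.

Lemma Lform_coef (R : realFieldType) n h p e (X : edge n -> R) :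
  Lform h p e X = \sum_(x : edge n) coef h p e x * X x.
Proof.
rewrite /Lform.
under [RHS]eq_bigr => x _ do rewrite ffunE mulr_suml.
rewrite [RHS]exchange_big /=; apply: eq_bigr => i _.
under [RHS]eq_bigr => x _ do rewrite mulr_suml.
rewrite [RHS]exchange_big /=; apply: eq_bigr => k _.
rewrite entry_sum !mulr_sumr; apply: eq_bigr => x _; by rewrite !mulrA.
Qed.

Lemma Omega_pl (R : realFieldType) n h :
  (forall k, h k <= h k.+1) -> (forall k, h k.+2 - h k.+1 <= h k.+1 - h k) ->
  piecewise_linear (@Omega R n h).
Proof.
move=> hm hc.
exists [seq coef h pe.1 pe.2 | pe <- enum {: {ffun 'I_n -> {perm 'I_n}} * {ffun 'I_n * 'I_n -> bool}}].
move=> X; have [p [e hpe]] := Lform_attain h X.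
exists (coef h p e); first by apply/mapP; exists (p, e); rewrite ?mem_enum.
by rewrite -hpe Lform_coef.
Qed.


Definition ind (R : realFieldType) (x : R) : R := (x != 0)%:R.

Lemma wsum_zero (R : realFieldType) (c : nat -> R) s :
  {in s, forall x, ind x = 0} -> wsum c (map (@ind R) s) = 0.
Proof.
move=> hs; rewrite (_ : map (@ind R) s = map (fun x => 0 * x) s); first by rewrite wsum_scale mul0r.
apply/eq_in_map.
by move=> x xs; rewrite mul0r hs.
Qed.

Lemma wsum_ind (R : realFieldType) (g : nat -> R) (u : seq R) :
  sorted (@geR R) u -> all (fun x => 0 <= x) u ->
  wsum (incr g) (map (@ind R) u) = g (count (fun x => x != 0) u) - g 0%N.
Proof.
elim: u g => [|x u IH] g su al /=; first by rewrite subrr.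
move: su; rewrite sorted_cons_all => /andP[ax su].
move: al => /= /andP[x0 al].
case: (eqVneq x 0) => hx.
  subst x.
  have hz : {in u, forall y, y = 0}.
    move=> y yu; have := allP al y yu; have := allP ax y yu.
    by rewrite /geR => h2 h1; apply/eqP; rewrite eq_le h2 h1.
  rewrite /= wsum_zero; last by move=> y /hz ->; rewrite /ind eqxx.
  rewrite /ind eqxx /= mulr0 add0r add0n.
  rewrite (@eq_in_count _ _ pred0); last by move=> y /hz ->; rewrite eqxx.
  by rewrite count_pred0 subrr.
rewrite /ind hx /= mulr1.
rewrite (@eq_wsum _ _ (incr (fun k => g k.+1))) // IH //.
rewrite /incr add1n; lra.
Qed.

Lemma count_row (R : realFieldType) n (X : edge n -> R) i :
  count (fun x => x != 0) (rowfull X i) = deg (supp X) i.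
Proof.
rewrite (seq.permP (rowfull_perm X i)) -cats1 count_cat.
rewrite (_ : count (fun x => x != 0) [:: (0:R)] = 0%N); last by rewrite /= eqxx.
rewrite addn0 count_map.
rewrite /deg -size_filter.
set l := filter _ _.
have ul : uniq l by rewrite filter_uniq // filter_uniq // enum_uniq.
rewrite -(card_uniqP ul); apply: eq_card => e.
by rewrite !inE mem_filter mem_filter mem_enum andbT /= normr_eq0 andbC.
Qed.

Lemma row_nonneg (R : realFieldType) n (X : edge n -> R) i :
  all (fun x => 0 <= x) (sort (@geR R) (rowfull X i)).
Proof. by rewrite all_sort; apply/allP => x /mapP [j _ ->]. Qed.

Lemma wsum_ind_row (R : realFieldType) n h (X : edge n -> R) i :
  h 0%N = 0 ->
  wsum (incr h) (map (@ind R) (sort (@geR R) (rowfull X i))) = h (deg (supp X) i).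
Proof.
move=> h0; rewrite wsum_ind; [|exact: (sort_sorted (@geR_total R)) | exact: row_nonneg].
have hp : perm_eq (sort (@geR R) (rowfull X i)) (rowfull X i) by rewrite perm_sort.
by rewrite h0 subr0 (seq.permP hp) count_row.
Qed.

Lemma entry_cases (R : numDomainType) n (X : edge n -> R) i j (P : R -> Prop) :
  P 0 -> (forall e, P (X e)) -> P (entry X i j).
Proof. by move=> P0 PX; rewrite entryE; case: oedge. Qed.

Lemma Omega_le_F (R : realFieldType) n h (X : edge n -> R) :
  h 0%N = 0 -> (forall k, h k <= h k.+1) -> linf_ball X ->
  Omega h X <= Fdeg h (supp X).
Proof.
move=> h0 hm hb; rewrite OmegaE /Fdeg; apply: ler_sum => i _.
rewrite -wsum_ind_row // -{1}(map_id (sort _ _)).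
apply: wsum_le; first exact: incr_ge0.
move=> x; rewrite mem_sort => /mapP [j _ ->]; rewrite /ind.
case: (eqVneq `|entry X i j| 0) => [->|hne] //=.
by apply: (@entry_cases _ _ X i j (fun y => `|y| <= 1)); rewrite ?normr0.
Qed.

Lemma entry_map (R : numDomainType) n (X : edge n -> R) (f : R -> R) i j :
  f 0 = 0 -> entry (fun x => f (X x)) i j = f (entry X i j).
Proof. by move=> f0; rewrite !entryE; case: oedge. Qed.

Lemma Omega_scale (R : realFieldType) n h (X : edge n -> R) t :
  0 <= t -> Omega h (fun x => t * X x) = t * Omega h X.
Proof.
move=> t0; rewrite !OmegaE mulr_sumr; apply: eq_bigr => i _.
have -> : rowfull (fun x => t * X x) i = map (fun y => t * y) (rowfull X i).
  rewrite /rowfull -[RHS]map_comp; apply/eq_in_map => j _ /=.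
  by rewrite (@entry_map _ _ X (fun y => t * y) i j) ?mulr0 // normrM ger0_norm.
rewrite -wsum_scale; congr wsum; apply: sortEq.
  by apply: perm_map; rewrite perm_sort.
apply: (homo_sorted (e := @geR R)); last exact: (sort_sorted (@geR_total R)).
by move=> x y; rewrite /geR => hxy; apply: ler_wpM2l.
Qed.


Lemma norm_peel (R : realFieldType) (a y : R) :
  0 <= a -> a <= `|y| -> y != 0 -> `|y - a * (y / `|y|)| = `|y| - a.
Proof.
move=> a0 ay y0.
have r0 : 0 < `|y| by rewrite normr_gt0.
have -> : y - a * (y / `|y|) = y * (1 - a / `|y|) by ring.
have h1 : 0 <= 1 - a / `|y| by rewrite subr_ge0 ler_pdivrMr // mul1r.
rewrite normrM (ger0_norm h1) mulrBr mulr1 mulrCA divff ?mulr1 //.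
by rewrite normr_eq0.
Qed.

Definition peel (R : realFieldType) (a : R) (y : R) : R := y - a * (y / `|y|).

Lemma peel_norm (R : realFieldType) (a y : R) :
  0 <= a -> (y = 0 \/ a <= `|y|) -> `|peel a y| = Num.max (`|y| - a) 0.
Proof.
move=> a0 [->|ay].
  by rewrite /peel normr0 mul0r mulr0 subr0 normr0 sub0r max_r // oppr_le0.
case: (eqVneq y 0) => [->|y0].
  by rewrite /peel normr0 mul0r mulr0 subr0 normr0 sub0r max_r // oppr_le0.
by rewrite /peel norm_peel // max_l // subr_ge0.
Qed.

Lemma Omega_peel (R : realFieldType) n h (X : edge n -> R) a :
  h 0%N = 0 -> 0 <= a -> (forall e, X e != 0 -> a <= `|X e|) ->
  Omega h X = a * Fdeg h (supp X) + Omega h (fun x => peel a (X x)).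
Proof.
move=> h0 a0 hmin.
rewrite !OmegaE /Fdeg mulr_sumr -big_split; apply: eq_bigr => i _ /=.
pose ga (y : R) := Num.max (y - a) 0.
have hcase : forall j, entry X i j = 0 \/ a <= `|entry X i j|.
  move=> j; apply: (@entry_cases _ _ X i j (fun y => y = 0 \/ a <= `|y|)); first by left.
  by move=> e; case: (eqVneq (X e) 0) => [->|/hmin]; [left|right].
have -> : rowfull (fun x => peel a (X x)) i = map ga (rowfull X i).
  rewrite /rowfull -[RHS]map_comp; apply/eq_in_map => j _ /=.
  rewrite (@entry_map _ _ X (peel a) i j); first exact: peel_norm.
  by rewrite /peel mul0r mulr0 subr0.
have -> : sort (@geR R) (map ga (rowfull X i)) = map ga (sort (@geR R) (rowfull X i)).
  apply: sortEq; first by apply: perm_map; rewrite perm_sort.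
  apply: (homo_sorted (e := @geR R)); last exact: (sort_sorted (@geR_total R)).
  move=> x y; rewrite /geR /ga => hxy.
  rewrite ge_max; apply/andP; split; rewrite le_max; apply/orP; [left; by rewrite lerD2r | by right].
rewrite -(@wsum_ind_row R n h X i h0) -wsum_lin; congr wsum.
apply/esym/map_id_in => x; rewrite mem_sort => /mapP [j _ ->].
case: (hcase j) => [->|hj]; first by rewrite normr0 /ind eqxx mulr0 add0r /ga sub0r max_r // oppr_le0.
case: (eqVneq (entry X i j) 0) => [->|hne].
  by rewrite normr0 /ind eqxx mulr0 add0r /ga sub0r max_r // oppr_le0.
rewrite /ind normr_eq0 hne /ga max_l ?subr_ge0 //=; ring.
Qed.

Lemma exists_min (T : eqType) (R : realFieldType) (f : T -> R) (s : seq T) x0 :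
  x0 \in s -> exists2 x, x \in s & forall y, y \in s -> f x <= f y.
Proof.
elim: s x0 => [|z s IH] x0 //= _.
case: s IH => [|w s] IH.
  by exists z; rewrite ?inE ?eqxx // => y; rewrite inE => /eqP ->.
have [x xs hx] := IH w (mem_head _ _).
case: (leP (f z) (f x)) => hzx.
  exists z; first exact: mem_head.
  move=> y; rewrite inE => /orP [/eqP ->//|/hx]; exact: le_trans.
exists x; first by rewrite inE xs orbT.
move=> y; rewrite inE => /orP [/eqP ->|/hx //]; exact: ltW.
Qed.

Lemma Fdeg_set0 (R : realFieldType) n (h : nat -> R) : h 0%N = 0 -> Fdeg h (set0 : {set edge n}) = 0.
Proof.
move=> h0; rewrite /Fdeg big1 // => v _.
have -> : deg (set0 : {set edge n}) v = 0%N.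
  by rewrite /deg; apply/eqP; rewrite cards_eq0; apply/eqP/setP => e; rewrite !inE.
exact: h0.
Qed.

Lemma Omega_zero (R : realFieldType) n h (X : edge n -> R) :
  (forall x, X x = 0) -> Omega h X = 0.
Proof.
move=> hX; have -> : X = (fun x => 0 * X x) by apply: functional_extensionality => x; rewrite hX mulr0.
by rewrite Omega_scale // mul0r.
Qed.

Lemma envelope (R : realFieldType) n h (phi : (edge n -> R) -> R) :
  h 0%N = 0 -> (forall k, h k <= h k.+1) ->
  convex_on (@linf_ball R (edge n)) phi ->
  (forall X, linf_ball X -> phi X <= Fdeg h (supp X)) ->
  forall X, linf_ball X -> phi X <= Omega h X.
Proof.
move=> h0 hm cphi hf.
have zcase : forall X : edge n -> R, linf_ball X -> supp X = set0 -> phi X <= Omega h X.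
  move=> X hb s0.
  have hX : forall x, X x = 0.
    move=> x; apply/eqP; apply: contraT => hx.
    have : x \in supp X by rewrite inE.
    by rewrite s0 inE.
  rewrite Omega_zero //; apply: le_trans (hf X hb) _; by rewrite s0 Fdeg_set0.
suff H : forall m (X : edge n -> R), (#|supp X| <= m)%N -> linf_ball X -> phi X <= Omega h X.
  by move=> X; apply: H (leqnn _).
elim=> [|m IH] X hs hb.
  by apply: zcase => //; apply/eqP; rewrite -cards_eq0 -leqn0.
case: (set_0Vmem (supp X)) => [s0|[e1 he1]]; first exact: zcase.
have he1' : e1 \in enum (supp X) by rewrite mem_enum.
have [e0 he0 hmin0] := exists_min (fun x => `|X x|) he1'.
rewrite mem_enum inE in he0.
set a := `|X e0|.
have a0 : 0 < a by rewrite normr_gt0.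
have a1 : a <= 1 by apply: hb.
have hmin : forall e, X e != 0 -> a <= `|X e|.
  by move=> e he; apply: hmin0; rewrite mem_enum inE.
pose Y := fun x => X x / `|X x|.
pose X' := fun x => peel a (X x).
pose Z := fun x => (1 - a)^-1 * X' x.
have hX'0 : forall x, X x = 0 -> X' x = 0.
  by move=> x hx; rewrite /X' /peel hx mul0r mulr0 subr0.
have hX' : forall x, `|X' x| <= 1 - a.
  move=> x; case: (eqVneq (X x) 0) => [hx|hx].
    by rewrite hX'0 // normr0 subr_ge0.
  rewrite /X' /peel norm_peel; [by rewrite lerD2r; apply: hb | exact: ltW | exact: hmin | exact: hx].
have hYb : linf_ball Y.
  move=> x; rewrite /Y; case: (eqVneq (X x) 0) => [->|hx]; first by rewrite mul0r normr0.
  by rewrite normf_div normr_id divff // normr_eq0.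
have hsY : supp Y = supp X.
  by apply/setP => x; rewrite !inE /Y mulf_eq0 invr_eq0 normr_eq0 orbb.
have hZ : forall x, (1 - a) * Z x = X' x.
  move=> x; rewrite /Z; case: (eqVneq a 1) => [ha|ha].
    have := hX' x; rewrite ha subrr normr_le0 => /eqP ->; by rewrite !mulr0.
  by rewrite mulrA mulfV ?mul1r // subr_eq0 eq_sym.
have hZb : linf_ball Z.
  move=> x; rewrite /Z normrM ger0_norm ?invr_ge0 ?subr_ge0 //.
  case: (eqVneq a 1) => [->|ha]; first by rewrite subrr invr0 mul0r.
  have ha' : 0 < 1 - a by rewrite subr_gt0 lt_neqAle ha a1.
  by rewrite mulrC ler_pdivrMr // mul1r.
have hsZ : (#|supp Z| <= m)%N.
  rewrite -ltnS; apply: leq_trans hs; apply: proper_card; apply/properP; split.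
    apply/subsetP => x; rewrite !inE; apply: contraNN => /eqP hx.
    by rewrite /Z hX'0 // mulr0.
  exists e0; first by rewrite inE.
  rewrite inE negbK /Z /X' /peel /a mulrCA divff ?mulr1 ?subrr ?mulr0 //.
  by rewrite normr_eq0.
have hXd : X = (fun x => a * Y x + (1 - a) * Z x).
  apply: functional_extensionality => x; rewrite hZ /X' /peel /Y; ring.
rewrite hXd; apply: le_trans (cphi Y Z a hYb hZb (ltW a0) a1) _.
rewrite -hXd (Omega_peel h0 (ltW a0) hmin) -/X'.
apply: lerD.
  by apply: ler_wpM2l; [exact: ltW | rewrite -hsY; exact: hf].
have -> : Omega h X' = (1 - a) * Omega h Z.
  case: (eqVneq a 1) => [ha|ha].
    rewrite ha subrr mul0r; apply: Omega_zero => x.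
    by have := hX' x; rewrite ha subrr normr_le0 => /eqP.
  rewrite /Z Omega_scale ?invr_ge0 ?subr_ge0 // mulrA mulfV ?mul1r //.
  by rewrite subr_eq0 eq_sym.
apply: ler_wpM2l; first by rewrite subr_ge0.
exact: IH.
Qed.


Lemma GL (R : realFieldType) (T : Type) (x0 : T) (q : pred T) (W : T -> R) (c : nat -> R) (u : seq T) :
  \sum_(0 <= p < size u) W (nth x0 u p) * ((q (nth x0 u p))%:R * c (count q (take p u)))
  = wsum c (map W (filter q u)).
Proof.
elim: u c => [|x u IH] c /=; first by rewrite big_geq.
rewrite big_nat_recl //=.
rewrite (IH (fun k => c (q x + k)%N)).
case: (q x) => /=.
  by rewrite mul1r mulrC; congr (_ + _); apply: eq_wsum.
by rewrite mul0r mulr0 add0r; apply: eq_wsum.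
Qed.

Lemma deg_list n (l : seq (edge n)) v :
  uniq l -> deg [set y in l] v = count (inc v) l.
Proof.
move=> ul; rewrite /deg -size_filter.
have ul' : uniq (filter (inc v) l) by rewrite filter_uniq.
rewrite -(card_uniqP ul'); apply: eq_card => e.
by rewrite !inE mem_filter andbC.
Qed.

Lemma lov_sum (R : realFieldType) n (h : nat -> R) (w : edge n -> R) (x0 : edge n) (s : seq (edge n)) :
  uniq s ->
  \sum_(x <- s) w x * (Fdeg h [set y in take (index x s).+1 s] - Fdeg h [set y in take (index x s) s])
  = \sum_(v : 'I_n) wsum (incr h) (map w (filter (inc v) s)).
Proof.
move=> us; rewrite (big_nth x0) /=.
rewrite (eq_big_nat _ _ (F2 := fun p => w (nth x0 s p) * \sum_(v : 'I_n)
    (inc v (nth x0 s p))%:R * incr h (count (inc v) (take p s)))); last first.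
  move=> p /andP[_ hp]; rewrite index_uniq //; congr (_ * _).
  rewrite /Fdeg -sumrB; apply: eq_bigr => v _.
  rewrite !deg_list ?take_uniq // (take_nth x0 hp) -cats1 count_cat /= addn0.
  by case: (inc v _) => /=; rewrite ?addn1 ?addn0 ?subrr ?mul1r ?mul0r.
under eq_bigr => p _ do rewrite mulr_sumr.
rewrite exchange_big /=; apply: eq_bigr => v _.
by rewrite -(GL x0).
Qed.

Lemma Omega_lovasz (R : realFieldType) n (h : nat -> R) (X : edge n -> R) (x0 : edge n) :
  Omega h X = lovasz (@Fdeg R n h) (fun e => `|X e|).
Proof.
rewrite /lovasz.
set w := fun e : edge n => `|X e|.
set s := sort _ _.
have us : uniq s by rewrite sort_uniq enum_uniq.
rewrite (lov_sum h w x0 us) OmegaE; apply: eq_bigr => v _.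
have -> : sort (@geR R) (rowfull X v) = rcons (map w (filter (inc v) s)) 0.
  apply: sortEq.
    rewrite perm_sym; apply: perm_trans (rowfull_perm X v) _.
    rewrite -!cats1 perm_cat2r; apply: perm_map; apply: perm_filter.
    by rewrite perm_sym perm_sort.
  apply: sorted_rcons0; last by apply/allP => x /mapP [e _ ->]; rewrite /w.
  rewrite sorted_map; apply: sorted_filter.
    by move=> y x z; rewrite /relpre /geR => h1 h2; apply: le_trans h2 h1.
  apply: sort_sorted => x y; exact: le_total.
by rewrite wsum_rcons0.
Qed.


Unset Implicit Arguments. Set Strict Implicit.

Theorem proposition2 (R : realFieldType) (n : nat) (h : nat -> R) :
  (2 <= n)%N ->
  h 0%N = 0 ->
  (forall k : nat, h k <= h k.+1) ->
  (forall k : nat, h k.+2 - h k.+1 <= h k.+1 - h k) ->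
  [/\ convex_envelope_on (@linf_ball R (edge n))
        (fun X => Fdeg h (supp X)) (@Omega R n h),
      (forall X : edge n -> R, @Omega R n h X = lovasz (@Fdeg R n h) (fun e => `|X e|)),
      convex_on (fun _ => True) (@Omega R n h) &
      piecewise_linear (@Omega R n h)].
Proof.
move=> n2 h0 hm hc.
have o0 : (0 < n)%N by apply: leq_trans n2.
pose x0 : edge n := @exist _ _ (Ordinal o0, Ordinal n2) isT.
split.
- split.
  + move=> X Y t _ _ t0 t1; exact: Omega_convex.
  + by move=> X hb; apply: Omega_le_F.
  + by move=> phi cphi hf X hb; apply: envelope.
- by move=> X; apply: Omega_lovasz.
- by move=> X Y t _ _ t0 t1; apply: Omega_convex.
- exact: Omega_pl.
Qed.
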